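(* In the coalition formation game above, every improvement path under the Marginal Utility order is finite. That is, there is no infinite sequence of profiles $s^{(0)},s^{(1)},s^{(2)},\dots$ such that for each $k$, $s^{(k+1)}$ is obtained from $s^{(k)}$ by a single UAV $j$ switching from task $s^{(k)}_j$ to a task $t\ne s^{(k)}_j$ with $C_t(s^{(k)})\cup\{j\}\succ_j C_{s^{(k)}_j}(s^{(k)})$. In particular, any procedure (such as the paper's MUCFC-CFG algorithm) that changes the partition only by such strictly improving unilateral switches makes finitely many changes, and if it stops only when no such switch exists, it terminates at a stable coalition partition.
   Context: $\mathcal M=\{1,\dots,M\}$ is a finite set of tasks and $\mathcal N=\{1,\dots,N\}$ a finite set of UAVs; a profile $s=(s_1,\dots,s_N)\in\mathcal M^N$ assigns task $s_j$ to UAV $j$ and induces coalitions $C_i(s)=\{j: s_j=i\}$. For each task $i$, $V_i$ is a real-valued characteristic function on subsets of $\mathcal N$ with $V_i(\emptyset)=0$. Shapley value of $j\in C$ for a coalition $C$ executing task $i$: $u_j(C)=\sum_{C'\subseteq C\setminus\{j\}}\frac{|C'|!(|C|-|C'|-1)!}{|C|!}[V_i(C'\cup\{j\})-V_i(C')]$. Marginal Utility order: for $j\in C$, $\mathrm{MU}_j(C)=u_j(C)+\sum_{g\in C\setminus\{j\}}[u_g(C)-u_g(C\setminus\{j\})]$ (Shapley values computed w.r.t. the task executed by $C$), and $C_k\succ_j C_l$ iff $\mathrm{MU}_j(C_k)>\mathrm{MU}_j(C_l)$. A partition is stable if no UAV $j$ and task $t\ne s_j$ satisfy $C_t\cup\{j\}\succ_j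 C_{s_j}$. *)

(* Defs.v *)
From HB Require Import structures.
From mathcomp Require Import all_boot all_order all_algebra.
Set Implicit Arguments. Unset Strict Implicit. Unset Printing Implicit Defensive.
Import Order.TTheory GRing.Theory Num.Theory.
Local Open Scope ring_scope.

(* Tasks are 'I_M, UAVs are 'I_N; a profile assigns a task to each UAV. *)
Definition profile (M N : nat) := {ffun 'I_N -> 'I_M}.

Definition coalition (M N : nat) (s : profile M N) (i : 'I_M) : {set 'I_N} :=
  [set j | s j == i].

Definition shapley (R : realFieldType) (N : nat) (v : {set 'I_N} -> R)
    (C : {set 'I_N}) (j : 'I_N) : R :=
  \sum_(C' in powerset (C :\ j))
     (((#|C'|)`! * (#|C| - #|C'| - 1)`!)%:R / ((#|C|)`!)%:R)
       * (v (C' :|: [set j]) - v C').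

Definition MU (R : realFieldType) (N : nat) (v : {set 'I_N} -> R)
    (j : 'I_N) (C : {set 'I_N}) : R :=
  shapley v C j +
  \sum_(g in C :\ j) (shapley v C g - shapley v (C :\ j) g).

Definition improving_step (R : realFieldType) (M N : nat)
    (V : 'I_M -> {set 'I_N} -> R) (s s' : profile M N) : Prop :=
  exists (j : 'I_N) (t : 'I_M),
    [/\ t != s j,
        MU (V (s j)) j (coalition s (s j)) < MU (V t) j (coalition s t :|: [set j])
      & s' = [ffun k => if k == j then t else s k]].

(* Main.v *)
Require Import Defs.
From mathcomp Require Import all_boot all_order all_algebra.
From mathcomp Require Import ring lra.
Import Order.TTheory GRing.Theory Num.Theory.
Set Implicit Arguments. Unset Strict Implicit.
Local Open Scope ring_scope.

Definition Wf (R : realFieldType) (N : nat) (v : {set 'I_N} -> R) (C : {set 'I_N}) : R :=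
  \sum_(g in C) shapley v C g.

Lemma MU_W (R : realFieldType) (N : nat) (v : {set 'I_N} -> R) (j : 'I_N) (C : {set 'I_N}) :
  j \in C -> MU v j C = Wf v C - Wf v (C :\ j).
Proof.
move=> hj; rewrite /MU /Wf sumrB [X in _ = X - _](bigD1 j) //=.
have -> : \sum_(i in C | i != j) shapley v C i = \sum_(g in C :\ j) shapley v C g.
  by apply: eq_bigl => i; rewrite !inE andbC.
lra.
Qed.

Definition Phi (R : realFieldType) (M N : nat) (V : 'I_M -> {set 'I_N} -> R)
  (s : profile M N) : R := \sum_(i : 'I_M) Wf (V i) (coalition s i).

Lemma step_incr (R : realFieldType) (M N : nat) (V : 'I_M -> {set 'I_N} -> R) s s' :
  improving_step V s s' -> Phi V s < Phi V s'.
Proof.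
case=> j [t] [ht hlt ->]; set a := s j.
have ja : j \in coalition s a by rewrite inE.
have jt : j \notin coalition s t by rewrite inE eq_sym.
rewrite MU_W // MU_W ?inE ?eqxx ?orbT // in hlt.
have E : (coalition s t :|: [set j]) :\ j = coalition s t.
  apply/setP => k; rewrite !inE; case: (eqVneq k j) => [->|] /=.
    by rewrite eq_sym (negbTE ht).
  by rewrite orbF.
rewrite E in hlt.
set s2 := [ffun k => _].
have Ct : coalition s2 t = coalition s t :|: [set j].
  apply/setP => k; rewrite !inE ffunE; case: (eqVneq k j) => [->|hk]; by rewrite ?eqxx ?orbT ?orbF.
have Ca : coalition s2 a = coalition s a :\ j.
  apply/setP => k; rewrite !inE ffunE; case: (eqVneq k j) => [->|hk] /=.
    exact: negbTE ht.
  by [].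
have Co : forall i, i != t -> i != a -> coalition s2 i = coalition s i.
  move=> i hit hia; apply/setP => k; rewrite !inE ffunE; case: (eqVneq k j) => [->|hk] //.
  rewrite eq_sym (negbTE hit); apply/esym; apply/negbTE; rewrite eq_sym; exact: hia.
rewrite /Phi (bigD1 t) //= [X in _ < X](bigD1 t) //=.
rewrite [\sum_(i | i != t) _](bigD1 a) /=; last by rewrite eq_sym.
rewrite [\sum_(i | i != t) _](bigD1 a) /=; last by rewrite eq_sym.
have -> : \sum_(i | (i != t) && (i != a)) Wf (V i) (coalition s2 i) =
          \sum_(i | (i != t) && (i != a)) Wf (V i) (coalition s i).
  by apply: eq_bigr => i /andP [h1 h2]; rewrite Co.
rewrite Ct Ca; lra.
Qed.

Theorem theorem4p6 (R : realFieldType) (M N : nat)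
    (V : 'I_M -> {set 'I_N} -> R) (hV0 : forall i, V i set0 = 0) :
  ~ exists f : nat -> profile M N, forall k : nat, improving_step V (f k) (f k.+1).
Proof.
case=> f hf.
have mono : forall k m, (k < m)%N -> Phi V (f k) < Phi V (f m).
  move=> k; elim=> // m IH; rewrite ltnS leq_eqVlt => /orP [/eqP ->|hkm].
    exact: step_incr.
  exact: lt_trans (IH hkm) (step_incr (hf m)).
pose g (i : 'I_(#|{: profile M N}|.+1)) := f i.
have ginj : injective g.
  move=> x y; rewrite /g => hxy; apply/val_inj => /=.
  case: (ltngtP x y) => // h.
  - by have := mono _ _ h; rewrite hxy ltxx.
  - by have := mono _ _ h; rewrite hxy ltxx.
have := leq_card g ginj; rewrite card_ord.
by rewrite ltnn.
Qed.
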